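(* Let $d\ge 2$. (a) Every domain $D\subset T_d$ with $|D|\le d$ is optimal. (b) Every full domain in $T_d$ is optimal. (c) If $D\subset T_d$ is a domain with $|D|\ge 2$ and $|R(D)|=1$, then $D$ is optimal. (d) If $D\subset T_d$ is an optimal domain with $|D|\ge 2$, then $|R(D)|\le d-2$.
   Context: $T_d$ is the $d$-regular tree (connected, acyclic, every vertex of degree $d$). A domain is a finite nonempty connected set $D$ of vertices of $T_d$, identified with its induced subgraph. For $x\in D$, $\deg_D(x)$ is the number of neighbours of $x$ lying in $D$. The (inner vertex) boundary is $\partial D=\{x\in D:\deg_D(x)<d\}$. For $k\ge1$, $I_d(k)=\min\{|\partial D| : D\subset T_d \text{ a domain with } |D|=k\}$, and a domain $D$ is optimal if $|\partial D|=I_d(|D|)$. For a domain with $|D|\ge 2$: the leaves are $L(D)=\{x\in\partial D:\deg_D(x)=1\}$, the residual boundary is $R(D)=\{x\in\partial D: 2\le \deg_D(x)\le d-1\}$, and $D$ is full if $R(D)=\emptyset$ (equivalently $\partial D=L(D)$). *)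

(* Defs.v *)
From HB Require Import structures.
From mathcomp Require Import all_boot finmap.
Set Implicit Arguments. Unset Strict Implicit. Unset Printing Implicit Defensive.
Local Open Scope fset_scope.

(* A vertex is a sequence of naturals [a0; a1; ...; ak]
   with a0 < d and ai < d-1 for i >= 1.  The root is [::]; the root has the d
   children [:: i] (i < d); a non-root vertex x has the d-1 children rcons x j
   (j < d-1) and one parent, hence degree d. *)
Definition vertex := seq nat.

Definition is_vertex (d : nat) (x : vertex) : bool :=
  match x with
  | [::] => true
  | a :: s => (a < d) && all (fun b => b < d.-1) s
  end.

Definition parent_of (u v : vertex) : bool :=
  (size v == (size u).+1) && (take (size u) v == u).

Definition adj (u v : vertex) : bool := parent_of u v || parent_of v u.

Definition connected_in (D : {fset vertex}) : Prop :=
  forall x y, x \in D -> y \in D ->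
    exists p : seq vertex, [/\ path adj x p, last x p = y & all (fun z => z \in D) p].

Definition domain (d : nat) (D : {fset vertex}) : Prop :=
  [/\ D != fset0, all (is_vertex d) D & connected_in D].

Definition degD (D : {fset vertex}) (x : vertex) : nat := #|` [fset y in D | adj x y]|.

Definition bdry (d : nat) (D : {fset vertex}) : {fset vertex} :=
  [fset x in D | degD D x < d].

(* D is optimal iff |bdry D| = I_d(|D|) = min over domains D' with |D'| = |D|
   of |bdry D'|; i.e. |bdry D| <= |bdry D'| for all such D' (D itself is one). *)
Definition optimal (d : nat) (D : {fset vertex}) : Prop :=
  forall D', domain d D' -> #|` D'| = #|` D| -> #|` bdry d D| <= #|` bdry d D'|.

Definition leaves (d : nat) (D : {fset vertex}) : {fset vertex} :=
  [fset x in bdry d D | degD D x == 1].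

Definition resid (d : nat) (D : {fset vertex}) : {fset vertex} :=
  [fset x in bdry d D | (2 <= degD D x) && (degD D x <= d.-1)].

Definition full (d : nat) (D : {fset vertex}) : Prop := resid d D = fset0.

(* Main.v *)
Require Import Defs.
From mathcomp Require Import all_boot finmap zify.
Set Implicit Arguments. Unset Strict Implicit.
Local Open Scope fset_scope.

Lemma countE (T : Type) (P : pred T) (s : seq T) : count P s = \sum_(y <- s) (P y : nat).
Proof. by elim: s => [|x s IH]; rewrite ?big_nil ?big_cons //= IH. Qed.

Lemma card_sep (D : {fset vertex}) (P : pred vertex) :
  #|` [fset y in D | P y]| = count P D.
Proof.
have -> : [fset y in D | P y] = [fset y in filter P (enum_fset D)].
  by apply/fsetP => y; rewrite !inE mem_filter andbC.
by rewrite card_fseq undup_id ?filter_uniq ?fset_uniq // size_filter.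
Qed.

Lemma degE D x : degD D x = count (adj x) D.
Proof. by rewrite /degD card_sep. Qed.

Lemma parent_size u v : parent_of u v -> size v = (size u).+1.
Proof. by case/andP => /eqP. Qed.

Lemma parent_take u v : parent_of u v -> u = take (size u) v.
Proof. by case/andP => _ /eqP. Qed.

Lemma parent_uniq u1 u2 v : parent_of u1 v -> parent_of u2 v -> u1 = u2.
Proof.
move=> h1 h2; rewrite (parent_take h1) (parent_take h2).
by have := parent_size h1; rewrite (parent_size h2) => -[->].
Qed.

Lemma parent_asym u v : parent_of u v -> parent_of v u = false.
Proof.
move=> h; apply/negP => h'; have := parent_size h; rewrite (parent_size h'). lia.
Qed.

Lemma adj_sym u v : adj u v = adj v u.
Proof. by rewrite /adj orbC. Qed.

Lemma adj_irr u : adj u u = false.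
Proof. by rewrite /adj /parent_of; case: eqP => // /n_Sn. Qed.

Lemma child_rcons x y : parent_of x y -> y = rcons x (nth 0 y (size x)).
Proof.
move=> h; have hs := parent_size h.
rewrite -[y in LHS](cat_take_drop (size x)) -(parent_take h) -cats1; congr (_ ++ _).
have : size (drop (size x) y) = 1 by rewrite size_drop hs; lia.
case E: (drop (size x) y) => [|a [|b t]] //= _.
by have := nth_drop (size x) 0 y 0; rewrite E addn0 => <-.
Qed.

Lemma parent_rcons x j : parent_of x (rcons x j).
Proof. by rewrite /parent_of size_rcons eqxx /= -cats1 (take_size_cat _ (erefl _)). Qed.

Lemma count_adj x s :
  count (adj x) s = (count (parent_of x) s + count (fun y => parent_of y x) s)%N.
Proof.
rewrite -count_predUI.
have -> : count (predI (parent_of x) (fun y => parent_of y x)) s = 0.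
  apply/eqP; rewrite -leqn0 leqNgt -has_count; apply/hasPn => y _ /=.
  by case h: (parent_of x y) => //=; rewrite parent_asym.
by rewrite addn0.
Qed.

Lemma parent_count_le1 x (s : seq vertex) : uniq s ->
  count (fun y => parent_of y x) s <= 1.
Proof.
move=> us; apply: (@leq_trans (count (pred1 (take (size x).-1 x)) s)).
  apply: sub_count => y /= h; apply/eqP; rewrite (parent_take h) (parent_size h) //.
by rewrite count_uniq_mem //; case: (_ \in _).
Qed.

Lemma exit_path (P : pred vertex) x p : path adj x p -> P x -> ~~ P (last x p) ->
  exists u v, [/\ adj u v, P u, ~~ P v, u \in x :: p & v \in p].
Proof.
elim: p x => [|z p IH] x /=; first by move=> _ ->.
case/andP => axz pz Px Pl.
case Pz: (P z).
  have [u [v [h1 h2 h3 h4 h5]]] := IH z pz Pz Pl.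
  exists u, v; split => //.
    by move: h4; rewrite !inE => /orP [->|->]; rewrite ?orbT.
  by rewrite inE h5 orbT.
by exists x, z; rewrite !inE !eqxx Pz.
Qed.

Lemma take_prefix_size (x u : vertex) : take (size x) u = x -> size x <= size u.
Proof. move=> h; have := size_take_min (size x) u; rewrite h; lia. Qed.

Lemma has_parent (D : {fset vertex}) (t x : vertex) : connected_in D -> t \in D ->
  (forall z : vertex, z \in D -> size t <= size z) -> x \in D -> x != t ->
  exists2 y, y \in D & parent_of y x.
Proof.
move=> cD tD tmin xD xt.
have [p [pp lp allp]] := cD x t xD tD.
pose P := fun z : vertex => take (size x) z == x.
have Px : P x by rewrite /P take_size.
have nPt : ~~ P (last x p).
  rewrite lp /P; apply/negP => /eqP h.
  have h1 := take_prefix_size h; have h2 := tmin _ xD.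
  have : size t = size x by apply/eqP; rewrite eqn_leq h1 h2.
  by move=> e; move: h; rewrite -e take_size => e'; rewrite e' eqxx in xt.
have [u [v [auv Pu nPv uin vin]]] := exit_path pp Px nPt.
have vD : v \in D by move/allP: allp; apply.
have hu := take_prefix_size (eqP Pu).
case/orP: auv => h.
- exfalso; move/negP: nPv; apply; rewrite /P.
  by rewrite -(take_takel v hu) -(parent_take h).
- exists v => //.
  have hs := parent_size h.
  case: (leqP (size x) (size v)) => hxv.
  + exfalso; move/negP: nPv; apply; rewrite /P.
    by rewrite (parent_take h) take_takel.
  + have : size x = size u by lia.
    move=> e; move/eqP: Pu; rewrite e take_size => <-; exact: h.
Qed.

Lemma top_exists (D : {fset vertex}) : D != fset0 ->
  exists2 t : vertex, t \in D & forall z : vertex, z \in D -> size t <= size z.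
Proof.
case/fset0Pn => z zD.
have ex : exists n, has (fun x : vertex => size x == n) D.
  by exists (size z); apply/hasP; exists z.
have [m /hasP [t tD /eqP st] mmin] := find_ex_minn ex.
exists t => // y yD; rewrite st; apply: mmin; apply/hasP; by exists y.
Qed.

Lemma parent_count (D : {fset vertex}) (t y : vertex) : connected_in D -> t \in D ->
  (forall z : vertex, z \in D -> size t <= size z) -> y \in D ->
  count (fun x => parent_of x y) D = (y != t).
Proof.
move=> cD tD tmin yD.
case: eqP => [->|/eqP yt].
  apply/eqP; rewrite -leqn0 leqNgt -has_count; apply/hasPn => x xD.
  apply/negP => h; have := tmin _ xD; rewrite (parent_size h); lia.
have [x xD hx] := has_parent cD tD tmin yD yt.
apply/eqP; rewrite eqn_leq parent_count_le1 ?fset_uniq //=.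
by rewrite -has_count; apply/hasP; exists x.
Qed.

Lemma sum_deg (D : {fset vertex}) : D != fset0 -> connected_in D ->
  \sum_(x <- D) degD D x = (2 * (#|` D| - 1))%N.
Proof.
move=> D0 cD; have [t tD tmin] := top_exists D0.
under eq_bigr => x _ do rewrite degE count_adj !countE.
rewrite big_split /=.
rewrite [X in (X + _)%N]exchange_big /=.
have e : \sum_(y <- D) \sum_(x <- D) (parent_of x y : nat) = (#|` D| - 1)%N.
  rewrite big_seq (eq_bigr (fun y => (y != t : nat))); last first.
    by move=> y yD; rewrite -countE (parent_count cD tD tmin yD).
  rewrite -big_seq -countE.
  have := count_predC (pred1 t) D; rewrite count_uniq_mem ?fset_uniq // tD.
  rewrite /= => h. by rewrite -h add1n subn1.
by rewrite e addnn -mul2n.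
Qed.

Lemma valid_child d (x : vertex) a : is_vertex d (rcons x a) ->
  a < (if x is [::] then d else d.-1).
Proof.
case: x => [|b s] /=; first by rewrite andbT.
by case/andP => _; rewrite all_rcons => /andP [].
Qed.

Lemma children_le d (x : vertex) (s : seq vertex) : uniq s -> all (is_vertex d) s ->
  count (parent_of x) s <= (if x is [::] then d else d.-1).
Proof.
move=> us vs; pose m := (if x is [::] then d else d.-1).
pose f := fun y : vertex => nth 0 y (size x).
rewrite -size_filter -(size_map f) -[m in _ <= m](size_iota 0).
apply: uniq_leq_size.
  rewrite map_inj_in_uniq ?filter_uniq //.
  move=> y1 y2; rewrite !mem_filter => /andP [h1 _] /andP [h2 _] e.
  by move: e; rewrite /f => e; rewrite [LHS](child_rcons h1) [RHS](child_rcons h2) e.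
move=> a /mapP [y]; rewrite mem_filter => /andP [h ys] ->.
rewrite mem_iota /= add0n.
have := allP vs y ys; rewrite {1}(child_rcons h) => /valid_child.
by rewrite /f.
Qed.

Lemma no_parent_root (s : seq vertex) : count (fun y => parent_of y [::]) s = 0.
Proof.
apply/eqP; rewrite -leqn0 leqNgt -has_count; apply/hasPn => y _.
by apply/negP => /parent_size.
Qed.

Lemma deg_le d (D : {fset vertex}) x : 1 <= d -> all (is_vertex d) D -> degD D x <= d.
Proof.
move=> d1 vD; rewrite degE count_adj.
have hc := children_le x (fset_uniq D) vD.
case: x hc => [|b s] hc; first by rewrite no_parent_root addn0.
have := parent_count_le1 (b :: s) (fset_uniq D).
move: hc; set c1 := count _ _; set c2 := count _ _ => h1 h2.
apply: (@leq_trans (d.-1 + 1)); first exact: leq_add.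
by rewrite addn1 prednK.
Qed.

Lemma other_elem (D : {fset vertex}) x : 2 <= #|` D| -> x \in D ->
  exists2 y, y \in D & y != x.
Proof.
move=> D2 xD; have := cardfsD1 x D; rewrite xD => e.
have : D `\ x != fset0.
  by rewrite -cardfs_gt0; move: D2; rewrite e add1n ltnS.
case/fset0Pn => y; rewrite in_fsetD1 => /andP [yx yD]; by exists y.
Qed.

Lemma deg_ge1 (D : {fset vertex}) x : connected_in D -> 2 <= #|` D| -> x \in D ->
  1 <= degD D x.
Proof.
move=> cD D2 xD.
have [y yD yx] := other_elem D2 xD.
have [[|z p] [pp lp allp]] := cD x y xD yD.
  by rewrite /= in lp; rewrite lp eqxx in yx.
case/andP: pp => axz _; move: allp => /= /andP [zD _].
by rewrite degE -has_count; apply/hasP; exists z.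
Qed.

Lemma sum_const_seq (T : Type) (s : seq T) (c : nat) : \sum_(x <- s) c = (size s * c)%N.
Proof. by elim: s => [|x s IH]; rewrite ?big_nil ?big_cons //= IH mulSn. Qed.

Lemma sep_sep (D : {fset vertex}) (P Q : pred vertex) :
  [fset x in [fset x in D | P x] | Q x] = [fset x in D | P x && Q x].
Proof. by apply/fsetP => x; rewrite !inE andbA. Qed.

Lemma key d (D : {fset vertex}) : 2 <= d -> domain d D -> 2 <= #|` D| ->
  exists E, [/\ (E + #|` bdry d D| + d * #|` D| = 2 * (#|` D| - 1) + d * #|` bdry d D|)%N,
     #|` resid d D| <= E & E <= (d - 2) * #|` resid d D|].
Proof.
move=> d2 [D0 vD cD] k2.
pose g := fun x => degD D x < d.
pose r := fun x => (degD D x < d) && ((2 <= degD D x) && (degD D x <= d.-1)).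
pose f := fun x => if degD D x < d then (degD D x - 1)%N else 0%N.
have hb : #|` bdry d D| = count g D by rewrite /bdry card_sep.
have hr : #|` resid d D| = count r D by rewrite /resid /bdry sep_sep card_sep.
exists (\sum_(x <- D) f x); rewrite hb hr !countE; split.
- have pw : forall x, x \in D -> (degD D x + d * g x = f x + g x + d)%N.
    move=> x xD; have h1 := deg_ge1 cD k2 xD; have h2 := deg_le x (ltnW d2) vD.
    rewrite /f /g; case: ltnP => h; rewrite /= ?muln1 ?muln0 ?addn0.
      by rewrite addn1 subn1 prednK.
    by apply/eqP; rewrite eqn_leq h h2.
  have : \sum_(x <- D) (degD D x + d * g x)%N = \sum_(x <- D) (f x + g x + d)%N by apply: eq_big_seq.
  rewrite !big_split /= -big_distrr /= sum_deg //.
  rewrite sum_const_seq => ->; rewrite mulnC.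
  by [].
- rewrite big_seq [X in _ <= X]big_seq; apply: leq_sum => x xD.
  rewrite /r /f; set n := degD D x.
  case h1: (n < d) => //=; case h2: (2 <= n); case h3 : (n <= d.-1) => //=;
  move: h1 h2 h3; rewrite -?(negbT _) => /= h1 h2 h3; lia.
- rewrite big_distrr /= big_seq [X in _ <= X]big_seq; apply: leq_sum => x xD.
  rewrite /r /f; set n := degD D x.
  case h1: (n < d) => //=; case h2: (2 <= n); case h3 : (n <= d.-1) => //=;
  move: h1 h2 h3; lia.
Qed.

Lemma bdry_small d (D : {fset vertex}) : #|` D| <= d -> #|` bdry d D| = #|` D|.
Proof.
move=> Dd; rewrite /bdry card_sep; apply/eqP; rewrite -all_count; apply/allP => x xD.
apply: (leq_trans _ Dd); rewrite degE.
have := count_predC (adj x) D.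
have : 0 < count (predC (adj x)) D by rewrite -has_count; apply/hasP; exists x; rewrite //= adj_irr.
move=> h1 h2; apply: (leq_trans _ (eq_leq h2)); by rewrite -addn1 leq_add2l.
Qed.

Lemma arith_b d k b b' E E' : 2 <= d ->
  (E + b + d * k = 2 * (k - 1) + d * b)%N ->
  (E' + b' + d * k = 2 * (k - 1) + d * b')%N -> E = 0 -> b <= b'.
Proof. move=> *; nia. Qed.

Lemma arith_c d k b b' E E' : 2 <= d ->
  (E + b + d * k = 2 * (k - 1) + d * b)%N ->
  (E' + b' + d * k = 2 * (k - 1) + d * b')%N -> E <= d - 2 -> b <= b'.
Proof. move=> *; nia. Qed.

Lemma arith_d d k b b' E E' : 2 <= d ->
  (E + b + d * k = 2 * (k - 1) + d * b)%N ->
  (E' + b' + d * k = 2 * (k - 1) + d * b')%N -> b <= b' -> E <= E'.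
Proof. move=> *; nia. Qed.

Lemma root_top (D : {fset vertex}) : forall z : vertex, z \in D -> size ([::] : vertex) <= size z.
Proof. by []. Qed.

Lemma free_child d (D : {fset vertex}) v : 2 <= d -> domain d D -> [::] \in D -> v \in D ->
  degD D v < d -> exists j, rcons v j \notin D /\ is_vertex d (rcons v j).
Proof.
move=> d2 [D0 vD cD] rD vinD dv.
have vv : is_vertex d v by apply: (allP vD).
pose m := (if v is [::] then d else d.-1).
case/boolP: (has (fun j => rcons v j \notin D) (iota 0 m)).
  case/hasP => j; rewrite mem_iota add0n /= => jm jD; exists j; split => //.
  rewrite /m in jm; clear m; move: vv jm; case: v {dv vinD jD} => [|b s] /=; first by rewrite andbT.
  by move=> /andP [-> hs] jm; rewrite all_rcons jm hs.
move/hasPn => allin; exfalso.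
have hc : m <= count (parent_of v) D.
  rewrite -size_filter -[m](size_iota 0) -(size_map (rcons v)).
  apply: uniq_leq_size.
    rewrite map_inj_uniq ?iota_uniq //; move=> a b /eqP; rewrite eqseq_rcons.
    by case/andP => _ /eqP.
  move=> y /mapP [j jin ->]; rewrite mem_filter parent_rcons /=.
  by have := allin j jin; rewrite negbK.
move: dv; rewrite degE count_adj; rewrite /m in hc; clear allin m.
case: v vinD vv hc => [|b s] vinD vv hc.
  rewrite no_parent_root addn0; move: hc; lia.
have [p pD pp] := has_parent cD rD (@root_top D) vinD isT.
have : 0 < count (fun y => parent_of y (b :: s)) D.
  by rewrite -has_count; apply/hasP; exists p.
move: hc; lia.
Qed.

Lemma new_nbrs d (D : {fset vertex}) v j : domain d D -> [::] \in D ->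
  rcons v j \notin D -> forall y, y \in D -> adj (rcons v j) y = (y == v).
Proof.
move=> [D0 vD cD] rD wD y yD.
case: eqP => [->|/eqP yv]; first by rewrite /adj parent_rcons orbT.
apply/negP; case/orP => h.
  have yr : y != [::] by apply/eqP => e; move: (parent_size h); rewrite e.
  have [p pD pp] := has_parent cD rD (@root_top D) yD yr.
  by move: pD; rewrite (parent_uniq pp h) (negbTE wD).
by move: yv; rewrite (parent_uniq h (parent_rcons v j)) eqxx.
Qed.

Lemma deg_add (D : {fset vertex}) v w : w \notin D -> v \in D ->
  (forall y, y \in D -> adj w y = (y == v)) ->
  (forall x, x \in D -> degD (w |` D) x = ((x == v) + degD D x)%N) /\ degD (w |` D) w = 1.
Proof.
move=> wD vD hn; split.
  move=> x xD; rewrite !degE !countE big_fsetU1 //= adj_sym hn //.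
rewrite !degE !countE big_fsetU1 //= adj_irr add0n.
rewrite big_seq (eq_bigr (fun y => (y == v : nat))); last by move=> y yD; rewrite hn.
by rewrite -big_seq -countE count_uniq_mem ?fset_uniq // vD.
Qed.

Lemma add_domain d (D : {fset vertex}) v w : domain d D -> v \in D -> w \notin D ->
  is_vertex d w -> adj v w -> domain d (w |` D).
Proof.
move=> [D0 vD cD] vinD wD wv avw; split.
- by apply/fset0Pn; exists w; rewrite fsetU11.
- apply/allP => x; rewrite in_fset1U => /orP [/eqP ->|xD] //; exact: (allP vD).
- have sub : forall p : seq vertex, all (fun z => z \in D) p -> all (fun z => z \in w |` D) p.
    by move=> p; apply: sub_all => z zD; rewrite in_fset1U zD orbT.
  move=> x y; rewrite !in_fset1U => /orP [/eqP ->|xD] /orP [/eqP ->|yD].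
  + by exists [::].
  + have [p [pp lp ap]] := cD v y vinD yD.
    exists (v :: p); split => //=; first by rewrite adj_sym avw.
    by rewrite in_fset1U vinD orbT sub.
  + have [p [pp lp ap]] := cD x v xD vinD.
    exists (rcons p w); split; first by rewrite rcons_path pp lp.
      by rewrite last_rcons.
    by rewrite all_rcons fsetU11 sub.
  + have [p [pp lp ap]] := cD x y xD yD; exists p; split => //; exact: sub.
Qed.

Lemma leq_sum_seq (T : eqType) (s : seq T) (F G : T -> nat) :
  (forall y, y \in s -> F y <= G y) -> \sum_(y <- s) F y <= \sum_(y <- s) G y.
Proof.
elim: s => [|x s IH] h; rewrite ?big_nil ?big_cons //.
apply: leq_add; first by apply: h; rewrite inE eqxx.
by apply: IH => y ys; apply: h; rewrite inE ys orbT.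
Qed.

Definition rr d (D : {fset vertex}) x :=
  (degD D x < d) && ((2 <= degD D x) && (degD D x <= d.-1)).

Lemma resid_count d D : #|` resid d D| = count (rr d D) D.
Proof. by rewrite /resid /bdry sep_sep card_sep. Qed.

Lemma pick_v d (D : {fset vertex}) k : 2 <= d -> domain d D -> #|` D| = k.+1 ->
  exists2 v, v \in D & (degD D v < d) && ((0 < #|` resid d D|) ==> rr d D v).
Proof.
move=> d2 [D0 vD cD] Dk.
case: (boolP (0 < #|` resid d D|)) => hR.
  move: hR; rewrite cardfs_gt0 => /fset0Pn [v]; rewrite /resid /bdry !inE /=.
  by case/andP => /andP [vin dv] h; exists v => //; rewrite dv /rr dv h.
suff : has (fun x => degD D x < d) D.
  by case/hasP => v vin dv; exists v => //; rewrite dv.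
apply/negPn/negP => /hasPn hall.
have := sum_deg D0 cD.
have : \sum_(x <- D) d <= \sum_(x <- D) degD D x.
  by rewrite big_seq [X in _ <= X]big_seq; apply: leq_sum => x xD; rewrite leqNgt hall.
rewrite sum_const_seq; change (size (enum_fset D)) with #|` D|; rewrite Dk.
move=> h1 h2; move: h1; rewrite h2; nia.
Qed.

Lemma construct d k : 2 <= d ->
  exists D, [/\ domain d D, #|` D| = k.+1, [::] \in D & #|` resid d D| <= 1].
Proof.
move=> d2; elim: k => [|k [D [dD Dk rD RD]]].
  exists [fset [::]]; split.
  - split; first by apply/fset0Pn; exists [::]; rewrite inE.
      by apply/allP => x; rewrite inE => /eqP ->.
    by move=> x y; rewrite !inE => /eqP -> /eqP ->; exists [::].
  - by rewrite cardfs1.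
  - by rewrite inE.
  - rewrite -(cardfs1 ([::] : vertex)); apply: fsubset_leq_card.
    by apply/fsubsetP => x; rewrite /resid /bdry !inE => /andP [/andP [] ].
have [v vD /andP [dv hv]] := pick_v d2 dD Dk.
have [j [wD wv]] := free_child d2 dD rD vD dv.
have hn := new_nbrs dD rD wD.
have [hdeg hdw] := deg_add wD vD hn.
have avw : adj v (rcons v j) by rewrite /adj parent_rcons.
exists (rcons v j |` D); split.
- exact: add_domain dD vD wD wv avw.
- by rewrite cardfsU1 wD Dk.
- by rewrite in_fset1U rD orbT.
rewrite resid_count countE big_fsetU1 //= {1}/rr hdw /=.
rewrite (andbF) add0n.
have eqo : forall y, y \in D -> y != v -> rr d (rcons v j |` D) y = rr d D y.
  by move=> y yD yv; rewrite /rr hdeg // (negbTE yv) add0n.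
case: (boolP (0 < #|` resid d D|)) => hR.
  have rv := implyP hv hR.
  apply: (leq_trans _ RD); rewrite resid_count countE.
  apply: leq_sum_seq => y yD; case: (eqVneq y v) => [->|yv]; first by rewrite rv; case: rr.
  by rewrite eqo.
move: hR; rewrite -eqn0Ngt resid_count => /eqP h0.
have h0' : forall y, y \in D -> rr d D y = false.
  move=> y yD; apply/negP => hy; move: h0; apply/eqP; rewrite -lt0n -has_count.
  by apply/hasP; exists y.
apply: (@leq_trans (count (pred1 v) D)); last by rewrite count_uniq_mem ?fset_uniq // vD.
rewrite countE; apply: leq_sum_seq => y yD.
case: (eqVneq y v) => [->|yv]; first by rewrite /= eqxx; case: rr.
by rewrite eqo // h0'.
Qed.

Theorem mainTheorem9 (d : nat) (hd : 2 <= d) :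
  [/\ (forall D, domain d D -> #|` D| <= d -> optimal d D),
      (forall D, domain d D -> 2 <= #|` D| -> full d D -> optimal d D),
      (forall D, domain d D -> 2 <= #|` D| -> #|` resid d D| = 1 -> optimal d D)
    & (forall D, domain d D -> 2 <= #|` D| -> optimal d D -> #|` resid d D| <= d - 2)].
Proof.
split.
- move=> D dD Dd D' dD' e.
  by rewrite (bdry_small Dd) bdry_small ?e.
- move=> D dD D2 fD D' dD' e.
  have [E [h1 h2 h3]] := key hd dD D2.
  have D2' : 2 <= #|` D'| by rewrite e.
  have [E' [h1' _ _]] := key hd dD' D2'.
  rewrite e in h1'.
  apply: (arith_b hd h1 h1'); move: h3; rewrite /full in fD; rewrite fD cardfs0 muln0.
  by rewrite leqn0 => /eqP.
- move=> D dD D2 R1 D' dD' e.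
  have [E [h1 h2 h3]] := key hd dD D2.
  have D2' : 2 <= #|` D'| by rewrite e.
  have [E' [h1' _ _]] := key hd dD' D2'.
  rewrite e in h1'.
  by apply: (arith_c hd h1 h1'); move: h3; rewrite R1 muln1.
- move=> D dD D2 opt.
  have [E [h1 h2 h3]] := key hd dD D2.
  have [D' [dD' e rD' R']] := construct (#|` D|).-1 hd.
  have ek : #|` D'| = #|` D| by rewrite e prednK // (leq_trans _ D2).
  have D2' : 2 <= #|` D'| by rewrite ek.
  have [E' [h1' _ h3']] := key hd dD' D2'.
  rewrite ek in h1'.
  have hle := arith_d hd h1 h1' (opt D' dD' ek).
  apply: (leq_trans h2); apply: (leq_trans hle); apply: (leq_trans h3').
  by rewrite -[X in _ <= X]muln1 leq_mul2l R' orbT.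
Qed.
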